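(* Consider the $l$-th cycle of RPF-SFISTA with $\mu=\mu_{l-1}$, and let $\gamma_j(x):=\phi(y_j)+2[\ell_f(y_j;\tilde x_{j-1})-f(y_j)]+\langle s_j,x-y_j\rangle+\frac{\mu}{4}\|x-y_j\|^2$. Then for every iteration index $j\ge1$ generated in this cycle and every $x\in\mathbb R^n$, $$A_{j-1}\gamma_j(y_{j-1})+a_{j-1}\gamma_j(x)+\frac{\tau_{j-1}}{2}\|x_{j-1}-x\|^2-\frac{\tau_j}{2}\|x_j-x\|^2\ \ge\ A_j\phi(y_j)+\frac{\chi A_jL_j}{2}\|y_j-\tilde x_{j-1}\|^2.$$
   Context: Setup. Let $f:\mathbb R^n\to\mathbb R$ be convex and differentiable with $\|\nabla f(z')-\nabla f(z)\|\le\bar L\|z'-z\|$ for all $z,z'\in\mathbb R^n$ (some $\bar L\ge0$). Let $h:\mathbb R^n\to(-\infty,\infty]$ be proper, lower semicontinuous and convex with domain $\mathcal H$. Let $\phi:=f+h$ be $\bar\mu$-strongly convex for some $\bar\mu>0$. Write $\ell_f(u;x):=f(x)+\langle\nabla f(x),u-x\rangle$. RPF-SFISTA. Parameters $\chi\in(0,1)$, $\beta>1$; inputs $\mu_0>0$, $\bar M_0>0$, $z_0\in\mathcal H$, $\hat\epsilon>0$. The method runs in cycles $l=1,2,\dots$. At the start of cycle $l$: choose $\underline M_l\in[\max\{\bar M_{l-1}/4,\bar M_0\},\bar M_{l-1}]$ (so $\underline M_1=\bar M_0$), set $\mu:=\mu_{l-1}$, $x_0:=z_{l-1}$, $\xi_0:=y_0:=x_0$,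 $A_0:=0$, $\tau_0:=1$, $L_0:=\underline M_l$. Then for $j=1,2,\dots$: (i) set $L_j:=L_{j-1}$; (ii) compute $a_{j-1}=\frac{\tau_{j-1}+\sqrt{\tau_{j-1}^2+4\tau_{j-1}A_{j-1}L_j}}{2L_j}$, $\tilde x_{j-1}=\frac{A_{j-1}y_{j-1}+a_{j-1}x_{j-1}}{A_{j-1}+a_{j-1}}$, $y_j=\arg\min_{u}\{\ell_f(u;\tilde x_{j-1})+h(u)+\frac{L_j}{2}\|u-\tilde x_{j-1}\|^2\}$; if $f(y_j)\le\ell_f(y_j;\tilde x_{j-1})+\frac{(1-\chi)L_j}{4}\|y_j-\tilde x_{j-1}\|^2$ go to (iii), otherwise replace $L_j$ by $\beta L_j$ and repeat (ii); (iii) set $\xi_j:=y_j$ if $\phi(y_j)\le\phi(\xi_{j-1})$ and $\xi_j:=\xi_{j-1}$ otherwise; $A_j:=A_{j-1}+a_{j-1}$; $\tau_j:=\tau_{j-1}+a_{j-1}\mu/2$; $s_j:=L_j(\tilde x_{j-1}-y_j)$; $x_j:=\tau_j^{-1}[\mu a_{j-1}y_j/2+\tau_{j-1}x_{j-1}-a_{j-1}s_j]$; $v_j:=\nabla f(y_j)-\nabla f(\tilde x_{j-1})+s_j$; (iv) if $\|\xi_j-x_0\|^2<\chi A_jL_j\|y_j-\tilde x_{j-1}\|^2$, the cycle ends with a restart: set $z_l:=\xi_j$, $\bar M_l:=L_j$, $\mu_l:=\mu/2$ and start cycle $l+1$; (v) otherwise, if $\|v_j\|\le\hat\epsilon$,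 stop and output $(y,v,\xi,L):=(y_j,v_j,\xi_j,L_j)$; else go to iteration $j+1$. In these formulas $L_j$, $a_{j-1}$, $\tilde x_{j-1}$, $y_j$ denote the final (accepted) values after the line search in (ii). *)

(* Defs.v *)
(* Vectors of R^n are row vectors 'rV[R]_n
   over R : realType; the Euclidean inner product and norm are defined below
   (the library's norm on matrices is the sup norm, not the Euclidean one). *)
From HB Require Import structures.
From mathcomp Require Import all_boot all_order all_algebra.
From mathcomp Require Import all_classical all_reals.
From mathcomp Require Import topology normedtype derive.
Set Implicit Arguments. Unset Strict Implicit. Unset Printing Implicit Defensive.
Import Order.TTheory GRing.Theory Num.Theory.
Import numFieldNormedType.Exports.
Local Open Scope classical_set_scope.
Local Open Scope ring_scope.

Section RPF.
Variables (R : realType) (n : nat).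
Notation V := 'rV[R]_n.

Definition dot (u w : V) : R := \sum_(i < n) u ord0 i * w ord0 i.
Definition sqn (u : V) : R := dot u u.
Definition enorm (u : V) : R := Num.sqrt (sqn u).

Definition is_gradient (f : V -> R) (g : V -> V) : Prop :=
  forall z, differentiable f z /\ forall d : V, ('d f z) d = dot (g z) d.

Definition convex_fun (f : V -> R) : Prop :=
  forall (u w : V) (t : R), 0 <= t <= 1 ->
    f (t *: u + (1 - t) *: w) <= t * f u + (1 - t) * f w.

(* An extended-valued function h : R^n -> (-oo, +oo] is encoded by a real-valued
   function h together with its (effective) domain H: h is +oo outside H and
   the real values of h outside H are irrelevant (never used). *)
Definition proper_lsc_convex (h : V -> R) (H : set V) : Prop :=
  [/\ (exists z, H z),
      (forall (u w : V) (t : R), H u -> H w -> 0 <= t <= 1 ->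
          H (t *: u + (1 - t) *: w) /\
          h (t *: u + (1 - t) *: w) <= t * h u + (1 - t) * h w)
    & (forall c : R, closed [set z | H z /\ h z <= c])].

Definition strongly_convex_ext (phi : V -> R) (H : set V) (mu : R) : Prop :=
  forall (u w : V) (t : R), H u -> H w -> 0 <= t <= 1 ->
    phi (t *: u + (1 - t) *: w) <=
      t * phi u + (1 - t) * phi w - mu / 2 * (t * (1 - t)) * sqn (u - w).

Definition linf (f : V -> R) (g : V -> V) (u x : V) : R := f x + dot (g x) (u - x).

(* step (ii) quantities, as functions of the trial constant Lc *)
Definition a_of (Aprev tprev Lc : R) : R :=
  (tprev + Num.sqrt (tprev ^+ 2 + 4 * tprev * Aprev * Lc)) / (2 * Lc).
Definition xt_of (Aprev ac : R) (yprev xprev : V) : V :=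
  (Aprev + ac)^-1 *: (Aprev *: yprev + ac *: xprev).

Definition is_prox (f : V -> R) (g : V -> V) (h : V -> R) (H : set V)
    (xt : V) (Lc : R) (y : V) : Prop :=
  H y /\ forall u, H u ->
    linf f g y xt + h y + Lc / 2 * sqn (y - xt) <=
    linf f g u xt + h u + Lc / 2 * sqn (u - xt).

Definition accepted (f : V -> R) (g : V -> V) (chi : R) (xt : V) (Lc : R) (y : V) : Prop :=
  f y <= linf f g y xt + (1 - chi) * Lc / 4 * sqn (y - xt).

Definition gammaj (f : V -> R) (g : V -> V) (h : V -> R) (mu : R)
    (yj xtj sj : V) (u : V) : R :=
  (f yj + h yj) + 2 * (linf f g yj xtj - f yj) + dot sj (u - yj)
  + mu / 4 * sqn (u - yj).

End RPF.

(* Main.v *)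
Require Import Defs.
From HB Require Import structures.
From mathcomp Require Import all_boot all_order all_algebra.
From mathcomp Require Import all_classical all_reals.
From mathcomp Require Import topology normedtype derive.
From mathcomp Require Import ring lra.
Import Order.TTheory GRing.Theory Num.Theory.
Import numFieldNormedType.Exports.
Local Open Scope classical_set_scope.
Local Open Scope ring_scope.


Lemma scal (R : realType) (A a tau L mu yp yn xi u xt s xn : R) : 0 <= A -> 0 < a -> 0 < tau -> 0 < L -> 0 <= mu ->
  L * a^+2 = tau*(A+a) ->
  xt = (A+a)^-1 * (A*yp + a*xi) -> s = L*(xt - yn) ->
  xn = (tau + a*mu/2)^-1 * (mu*a/2*yn + tau*xi - a*s) ->
  0 <= A*(s*(yp-yn) + mu/4*((yp-yn)*(yp-yn))) + a*(s*(u-yn) + mu/4*((u-yn)*(u-yn)))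
     + tau/2*((xi-u)*(xi-u)) - (tau+a*mu/2)/2*((xn-u)*(xn-u)) - (A+a)*L/2*((yn-xt)*(yn-xt)).
Proof.
move=> hA ha ht hL hm hc -> -> ->.
have hA' : A = L * a^+2 / tau - a.
  by apply/eqP; rewrite eq_sym subr_eq hc mulrAC divff ?mul1r // gt_eqF.
have ht2 : tau + a*mu/2 != 0 by apply: lt0r_neq0; apply: ltr_wpDr => //; apply: divr_ge0 => //; apply: mulr_ge0 => //; apply: ltW.
set E := (X in 0 <= X).
have -> : E = A*mu/4*((yp-yn)^+2) + a*mu/4*(((tau + a*mu/2)^-1 * (mu*a/2*yn + tau*xi - a*(L*((A+a)^-1 * (A*yp + a*xi) - yn)))-yn)^+2) + tau/2*(((tau + a*mu/2)^-1 * (mu*a/2*yn + tau*xi - a*(L*((A+a)^-1 * (A*yp + a*xi) - yn)))-xi+a*(L*((A+a)^-1 * (A*yp + a*xi) - yn))/tau)^+2).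
  rewrite /E; move: ht2; rewrite hA' => ht2.
  have hAa : L * a ^+ 2 / tau - a + a != 0.
    by rewrite subrK; apply: lt0r_neq0; apply: divr_gt0 => //; apply: mulr_gt0 => //; apply: exprn_gt0.
  field; rewrite ?hAa ?ht2 ?gt_eqF //=.
  - by apply: ltr_wpDr; [apply: mulr_ge0; [apply: ltW|] | apply: mulr_gt0].
  - by rewrite mulNr subrK; apply: mulr_gt0 => //; apply: exprn_gt0.
by apply: addr_ge0; [apply: addr_ge0|]; apply: mulr_ge0; rewrite ?sqr_ge0 // ?divr_ge0 // ?mulr_ge0 // ltW.
Qed.

Lemma aof (R : realType) (A tau Lc : R) : 0 <= A -> 0 < tau -> 0 < Lc ->
  0 < a_of A tau Lc /\ Lc * (a_of A tau Lc)^+2 = tau * (A + a_of A tau Lc).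
Proof.
move=> hA ht hL; rewrite /a_of.
have hq : 0 <= tau ^+ 2 + 4 * tau * A * Lc.
  by apply: addr_ge0; [apply: sqr_ge0|]; rewrite !mulr_ge0 // ltW.
set sq := Num.sqrt _.
have hsq : sq ^+ 2 = tau ^+ 2 + 4 * tau * A * Lc by rewrite sqr_sqrtr.
split.
  by apply: divr_gt0; [apply: ltr_wpDr; rewrite ?sqrtr_ge0 | apply: mulr_gt0].
apply/eqP; rewrite -subr_eq0.
have -> : Lc * ((tau + sq) / (2 * Lc)) ^+ 2 - tau * (A + (tau + sq) / (2 * Lc))
   = (sq ^+ 2 - (tau ^+ 2 + 4 * tau * A * Lc)) / (4 * Lc).
  by field; rewrite gt_eqF.
by rewrite hsq subrr mul0r.
Qed.

Theorem lemmaA3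
  (R : realType) (n : nat)
  (* problem data *)
  (f : 'rV[R]_n -> R) (gradf : 'rV[R]_n -> 'rV[R]_n) (Lbar : R)
  (h : 'rV[R]_n -> R) (H : set 'rV[R]_n) (mubar : R)
  (Hgrad : is_gradient f gradf)
  (Hfconv : convex_fun f)
  (HLbar : 0 <= Lbar)
  (Hlip : forall z z' : 'rV[R]_n, enorm (gradf z' - gradf z) <= Lbar * enorm (z' - z))
  (Hh : proper_lsc_convex h H)
  (Hmubar : 0 < mubar)
  (Hphi : strongly_convex_ext (fun z => f z + h z) H mubar)
  (* method parameters and inputs *)
  (chi beta mu0 Mbar0 eps : R)
  (Hchi : 0 < chi < 1) (Hbeta : 1 < beta)
  (Hmu0 : 0 < mu0) (HMbar0 : 0 < Mbar0) (Heps : 0 < eps)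
  (* the l-th cycle: mu = mu_{l-1}, started at z_{l-1} in H with L_0 = underline M_l *)
  (l : nat) (Hl : (0 < l)%N)
  (mu Mlow : R) (zprev : 'rV[R]_n)
  (Hmu : mu = mu0 / 2 ^+ l.-1)
  (HMlow : Mbar0 <= Mlow)
  (Hz : H zprev)
  (* the sequences generated in the cycle *)
  (A tau a L : nat -> R) (x y xi xt s v : nat -> 'rV[R]_n)
  (HA0 : A 0%N = 0) (Htau0 : tau 0%N = 1) (HL0 : L 0%N = Mlow)
  (Hx0 : x 0%N = zprev) (Hy0 : y 0%N = zprev) (Hxi0 : xi 0%N = zprev)
  (* the iteration index j >= 1 *)
  (j : nat) (Hj : (0 < j)%N)
  (* steps (i)-(iii) of every iteration i+1 <= j *)
  (Hls : forall i : nat, (i < j)%N ->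
     exists k : nat,
       [/\ L i.+1 = beta ^+ k * L i,
           (forall k' : nat, (k' < k)%N -> forall y' : 'rV[R]_n,
              let Lc := beta ^+ k' * L i in
              let ac := a_of (A i) (tau i) Lc in
              let xtc := xt_of (A i) ac (y i) (x i) in
              is_prox f gradf h H xtc Lc y' -> ~ accepted f gradf chi xtc Lc y'),
           a i = a_of (A i) (tau i) (L i.+1) /\
           xt i = xt_of (A i) (a i) (y i) (x i),
           is_prox f gradf h H (xt i) (L i.+1) (y i.+1)
         & accepted f gradf chi (xt i) (L i.+1) (y i.+1)])
  (Hupd : forall i : nat, (i < j)%N ->
     [/\ xi i.+1 = (if f (y i.+1) + h (y i.+1) <= f (xi i) + h (xi i)
                    then y i.+1 else xi i),
         A i.+1 = A i + a i /\
         tau i.+1 = tau i + a i * mu / 2,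
         s i.+1 = L i.+1 *: (xt i - y i.+1),
         x i.+1 = (tau i.+1)^-1 *: (mu * a i / 2 *: y i.+1 + tau i *: x i - a i *: s i.+1)
       & v i.+1 = gradf (y i.+1) - gradf (xt i) + s i.+1])
  (* iterations 1, ..., j-1 neither restarted the cycle (iv) nor stopped (v) *)
  (Hcont : forall i : nat, (0 < i)%N -> (i < j)%N ->
     ~ (sqn (xi i - x 0%N) < chi * A i * L i * sqn (y i - xt i.-1))
     /\ ~ (enorm (v i) <= eps)) :
  forall u : 'rV[R]_n,
    A j.-1 * gammaj f gradf h mu (y j) (xt j.-1) (s j) (y j.-1)
    + a j.-1 * gammaj f gradf h mu (y j) (xt j.-1) (s j) u
    + tau j.-1 / 2 * sqn (x j.-1 - u) - tau j / 2 * sqn (x j - u)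
    >= A j * (f (y j) + h (y j)) + chi * A j * L j / 2 * sqn (y j - xt j.-1).
Proof.
have hmu : 0 < mu by rewrite Hmu; apply: divr_gt0 => //; apply: exprn_gt0.
have pos : forall i, (i <= j)%N -> [/\ 0 < L i, 0 <= A i & 0 < tau i].
  elim=> [_|i IH hi]; first by rewrite HL0 HA0 Htau0; split => //; exact: (lt_le_trans HMbar0 HMlow).
  have hij : (i < j)%N by [].
  have [hLi hAi hti] := IH (ltnW hi).
  have [k [hL _ [ha _] _ _]] := Hls i hij.
  have [_ [hA ht] _ _ _] := Hupd i hij.
  have hL' : 0 < L i.+1 by rewrite hL; apply: mulr_gt0 => //; apply: exprn_gt0; exact: (lt_trans ltr01 Hbeta).
  have [hapos _] := @aof R _ _ _ hAi hti hL'.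
  rewrite -ha in hapos.
  split => //; first by rewrite hA addr_ge0 // ltW.
  rewrite ht; apply: ltr_wpDr => //; apply: divr_ge0 => //; by apply: mulr_ge0; apply: ltW.
move=> u.
case: j Hj Hls Hupd Hcont pos => // i _ Hls Hupd Hcont pos /=.
have [hLi hAi hti] := pos i (leqnSn i).
have [k [hL _ [ha hxt] _ hacc]] := Hls i (ltnSn i).
have [_ [hA ht] hs hx _] := Hupd i (ltnSn i).
have [hLi1 _ _] := pos i.+1 (leqnn _).
have [hapos hquad] := @aof R _ _ _ hAi hti hLi1.
rewrite -ha in hapos hquad.
move: hacc; rewrite /accepted => hacc.
rewrite /gammaj hA ht.
set Lf := linf f gradf (y i.+1) (xt i).
set P := f (y i.+1) + h (y i.+1).
set Fy := f (y i.+1).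
set S5 := sqn (y i.+1 - xt i).
set B := A i * (dot (s i.+1) (y i - y i.+1) + mu / 4 * sqn (y i - y i.+1))
   + a i * (dot (s i.+1) (u - y i.+1) + mu / 4 * sqn (u - y i.+1))
   + tau i / 2 * sqn (x i - u) - (tau i + a i * mu / 2) / 2 * sqn (x i.+1 - u)
   - (A i + a i) * L i.+1 / 2 * S5.
have hB : 0 <= B.
  have -> : B = \sum_(k0 < n) (A i * (s i.+1 ord0 k0 * (y i ord0 k0 - y i.+1 ord0 k0)
        + mu / 4 * ((y i ord0 k0 - y i.+1 ord0 k0) * (y i ord0 k0 - y i.+1 ord0 k0)))
      + a i * (s i.+1 ord0 k0 * (u ord0 k0 - y i.+1 ord0 k0)
        + mu / 4 * ((u ord0 k0 - y i.+1 ord0 k0) * (u ord0 k0 - y i.+1 ord0 k0)))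
      + tau i / 2 * ((x i ord0 k0 - u ord0 k0) * (x i ord0 k0 - u ord0 k0))
      - (tau i + a i * mu / 2) / 2 * ((x i.+1 ord0 k0 - u ord0 k0) * (x i.+1 ord0 k0 - u ord0 k0))
      - (A i + a i) * L i.+1 / 2 * ((y i.+1 ord0 k0 - xt i ord0 k0) * (y i.+1 ord0 k0 - xt i ord0 k0))).
    have bs : forall F G : 'I_n -> R, \sum_(k0 < n) F k0 + \sum_(k0 < n) G k0 = \sum_(k0 < n) (F k0 + G k0).
      by move=> F G; rewrite big_split.
    have sb : forall F G : 'I_n -> R, \sum_(k0 < n) F k0 - \sum_(k0 < n) G k0 = \sum_(k0 < n) (F k0 - G k0).
      by move=> F G; rewrite sumrB.
    rewrite /B /S5 /sqn /dot !(mulr_sumr, bs, sb).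
    by apply: eq_bigr => k0 _; rewrite !mxE.
  apply: sumr_ge0 => k0 _.
  apply: (@scal R _ _ _ _ _ _ _ _ _ (xt i ord0 k0) (s i.+1 ord0 k0)) => //; try apply: ltW => //.
  - by rewrite hxt /xt_of !mxE.
  - by rewrite hs !mxE.
  - by rewrite hx ht hs !mxE; congr (_ * _); rewrite mulrC.
have hc : 0 <= Lf - Fy + (1 - chi) * L i.+1 / 4 * S5 by rewrite /Lf /Fy /S5; lra.
have hA' : 0 <= A i + a i by rewrite addr_ge0 // ltW.
rewrite -subr_ge0.
have -> : A i * (P + 2 * (Lf - Fy) + dot (s i.+1) (y i - y i.+1) + mu / 4 * sqn (y i - y i.+1))
  + a i * (P + 2 * (Lf - Fy) + dot (s i.+1) (u - y i.+1) + mu / 4 * sqn (u - y i.+1))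
  + tau i / 2 * sqn (x i - u) - (tau i + a i * mu / 2) / 2 * sqn (x i.+1 - u)
  - ((A i + a i) * P + chi * (A i + a i) * L i.+1 / 2 * S5)
  = 2 * (A i + a i) * (Lf - Fy + (1 - chi) * L i.+1 / 4 * S5) + B.
  rewrite /B; clearbody Lf P Fy S5; by field.
by apply: addr_ge0 => //; apply: mulr_ge0 => //; apply: mulr_ge0.
Qed.
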